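(* Let $\otimes$ and $\oplus$ be uninorms on $[0,1]$. If $\otimes$ is a $T$-norm which is a copula and $\oplus$ satisfies property $A'$, then $(\otimes,\oplus)$ satisfies the rearrangement inequality. If $\otimes$ satisfies property $A$ and $\oplus$ is a $T$-conorm which is the dual $\Phi(c)(x,y)=1-c(1-x,1-y)$ of a copula $c$, then $(\otimes,\oplus)$ satisfies the dual rearrangement inequality.
   Context: A uninorm is a function $\otimes:[0,1]^2\to[0,1]$ that is commutative, associative, monotonic ($x\leq y$ implies $x\otimes z\leq y\otimes z$), and has an identity element $e\in[0,1]$; a $T$-norm is a uninorm with identity $1$, a $T$-conorm one with identity $0$. A copula is a function $c:[0,1]^2\to[0,1]$ that satisfies neutrality of $1$, is monotonic, and satisfies property $B$: for all $0\leq x\leq y\leq1$, $0\leq z\leq w\leq1$, $c(x,w)-c(x,z)\leq c(y,w)-c(y,z)$. Property $A$: for all $0\leq x\leq y\leq z\leq w\leq 1$, $w+x\leq y+z\Rightarrow f(x,w)\leq f(y,z)$; property $A'$: for all such, $w+x\geq y+z\Rightarrow f(x,w)\geq f(y,z)$. $(\otimes,\oplus)$ satisfies the rearrangement inequality if for every $n\geq1$, all $0\leq x_1\leq\cdots\leq x_n\leq 1$, $0\leq y_1\leq\cdots\leq y_n\leq 1$ and every permutation $\sigma$ of $\{1,\dots,n\}$, $$(x_n\otimes y_1)\oplus\cdots\oplus(x_1\otimes y_n)\leq (x_{\sigma(1)}\otimes y_1)\oplus\cdots\oplus(x_{\sigma(n)}\otimes y_n)\leq (x_1\otimes y_1)\oplus\cdots\oplus(x_n\otimes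 y_n),$$ and the dual rearrangement inequality if for all such data $$(x_n\oplus y_1)\otimes\cdots\otimes(x_1\oplus y_n)\geq (x_{\sigma(1)}\oplus y_1)\otimes\cdots\otimes(x_{\sigma(n)}\oplus y_n)\geq (x_1\oplus y_1)\otimes\cdots\otimes(x_n\oplus y_n).$$ *)

(* Defs.v *)
From HB Require Import structures.
From mathcomp Require Import all_boot all_order all_algebra all_fingroup.
From mathcomp Require Import reals.
Set Implicit Arguments. Unset Strict Implicit. Unset Printing Implicit Defensive.
Import Order.TTheory GRing.Theory Num.Theory.
Local Open Scope ring_scope.

Section Defs.
Variable R : realType.

Definition in01 (x : R) : Prop := 0 <= x <= 1.

Definition uninorm_with (f : R -> R -> R) (e : R) : Prop :=
  (forall x y, in01 x -> in01 y -> in01 (f x y)) /\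
  (forall x y, in01 x -> in01 y -> f x y = f y x) /\
  (forall x y z, in01 x -> in01 y -> in01 z -> f x (f y z) = f (f x y) z) /\
  (forall x y z, in01 x -> in01 y -> in01 z -> x <= y -> f x z <= f y z) /\
  in01 e /\
  (forall x, in01 x -> f e x = x).

Definition uninorm (f : R -> R -> R) : Prop := exists e, uninorm_with f e.
Definition tnorm (f : R -> R -> R) : Prop := uninorm_with f 1.
Definition tconorm (f : R -> R -> R) : Prop := uninorm_with f 0.

Definition copula (c : R -> R -> R) : Prop :=
  [/\ (forall x y, in01 x -> in01 y -> in01 (c x y)),
      (forall x, in01 x -> c x 1 = x /\ c 1 x = x),
      (forall x y z, in01 x -> in01 y -> in01 z -> x <= y -> c x z <= c y z),
      (forall x y z, in01 x -> in01 y -> in01 z -> x <= y -> c z x <= c z y) &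
      (forall x y z w, 0 <= x -> x <= y -> y <= 1 -> 0 <= z -> z <= w -> w <= 1 ->
         c x w - c x z <= c y w - c y z)].

Definition dual_of (c : R -> R -> R) : R -> R -> R :=
  fun x y => 1 - c (1 - x) (1 - y).

Definition propA (f : R -> R -> R) : Prop :=
  forall x y z w, 0 <= x -> x <= y -> y <= z -> z <= w -> w <= 1 ->
    w + x <= y + z -> f x w <= f y z.

Definition propA' (f : R -> R -> R) : Prop :=
  forall x y z w, 0 <= x -> x <= y -> y <= z -> z <= w -> w <= 1 ->
    w + x >= y + z -> f x w >= f y z.

Fixpoint fold1 (op : R -> R -> R) (s : seq R) : R :=
  match s with
  | [::] => 0
  | [:: a] => a
  | a :: s' => op a (fold1 op s')
  end.

(* sorted data in [0,1], indexed by 'I_n (index i stands for i+1 in the paper) *)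
Definition sorted01 (n : nat) (x : 'I_n -> R) : Prop :=
  (forall i, in01 (x i)) /\ (forall i j : 'I_n, (i <= j)%N -> x i <= x j).

Definition comb (op1 op2 : R -> R -> R) (n : nat) (x y : 'I_n -> R)
  (s : 'I_n -> 'I_n) : R :=
  fold1 op2 [seq op1 (x (s i)) (y i) | i <- enum 'I_n].

Definition rearrangement (otimes oplus : R -> R -> R) : Prop :=
  forall (n : nat) (x y : 'I_n -> R) (sigma : 'S_n), (0 < n)%N ->
    sorted01 x -> sorted01 y ->
    comb otimes oplus x y (@rev_ord n) <= comb otimes oplus x y sigma
    /\ comb otimes oplus x y sigma <= comb otimes oplus x y id.

Definition dual_rearrangement (otimes oplus : R -> R -> R) : Prop :=
  forall (n : nat) (x y : 'I_n -> R) (sigma : 'S_n), (0 < n)%N ->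
    sorted01 x -> sorted01 y ->
    comb oplus otimes x y (@rev_ord n) >= comb oplus otimes x y sigma
    /\ comb oplus otimes x y sigma >= comb oplus otimes x y id.

End Defs.

(* Main.v *)
Require Import Defs.
From mathcomp Require Import all_boot all_order all_algebra all_fingroup.
From mathcomp Require Import reals.
From mathcomp Require Import lra.
Set Implicit Arguments. Unset Strict Implicit. Unset Printing Implicit Defensive.
Import Order.TTheory GRing.Theory Num.Theory.
Local Open Scope ring_scope.

Definition Gf {R : realType} (O I : R -> R -> R) (e : R) (ps : seq (R * R)) :=
  foldr O e [seq I p.1 p.2 | p <- ps].

Lemma foldr_in01 {R : realType} (O : R -> R -> R) e (s : seq R) :
  uninorm_with O e -> (forall x, x \in s -> in01 x) -> in01 (foldr O e s).
Proof.
case=> [cl [_ [_ [_ [e01 _]]]]].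
elim: s => [|a s IH] Hs //=.
apply: cl; first by apply: Hs; rewrite inE eqxx.
by apply: IH => x hx; apply: Hs; rewrite inE hx orbT.
Qed.

Lemma foldr_rem {R : realType} (O : R -> R -> R) e (s : seq R) a :
  uninorm_with O e -> (forall x, x \in s -> in01 x) -> a \in s ->
  foldr O e s = O a (foldr O e (rem a s)).
Proof.
move=> hO; have [cl [cm [asc _]]] := hO.
elim: s => [|b s IH] Hs //= ha.
case: eqP => [->|nba] //=.
have has : a \in s by move: ha; rewrite inE => /orP [/eqP eab|//]; case: nba; rewrite eab.
have Hs' : forall x, x \in s -> in01 x by move=> x hx; apply: Hs; rewrite inE hx orbT.
have hb : in01 b by apply: Hs; rewrite inE eqxx.
have ha' : in01 a by apply: Hs'.
have hF : in01 (foldr O e (rem a s)).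
  by apply: foldr_in01 hO _ => x hx; apply: Hs'; apply: (mem_rem hx).
rewrite IH // asc // (cm b a) // -asc //.
Qed.

Lemma foldr_perm {R : realType} (O : R -> R -> R) e (s1 s2 : seq R) :
  uninorm_with O e -> perm_eq s1 s2 -> (forall x, x \in s1 -> in01 x) ->
  foldr O e s1 = foldr O e s2.
Proof.
move=> hO; elim: s1 s2 => [|a s1 IH] s2 hp Hs.
  by case: s2 hp => // b s2 /perm_size.
have ha : a \in s2 by rewrite -(perm_mem hp) inE eqxx.
have Hs2 : forall x, x \in s2 -> in01 x by move=> x; rewrite -(perm_mem hp); apply: Hs.
rewrite (foldr_rem hO Hs2 ha) /=; congr (O a _).
apply: IH; last by move=> x hx; apply: Hs; rewrite inE hx orbT.
by rewrite -(perm_cons a); apply: perm_trans hp (perm_to_rem _).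
Qed.

Lemma fold1_foldr {R : realType} (O : R -> R -> R) e (s : seq R) :
  uninorm_with O e -> (forall x, x \in s -> in01 x) -> s != [::] ->
  fold1 O s = foldr O e s.
Proof.
move=> hO; have [cl [cm [asc [_ [e01 eid]]]]] := hO.
elim: s => [|a s IH] //= Hs _.
case: s IH Hs => [|b s] IH Hs.
  by rewrite /= cm ?eid //; apply: Hs; rewrite inE eqxx.
by rewrite IH //; move=> x hx; apply: Hs; rewrite inE hx orbT.
Qed.

Lemma mem_zip' {S T : eqType} (s : seq S) (t : seq T) p :
  p \in zip s t -> p.1 \in s /\ p.2 \in t.
Proof.
elim: s t => [|a s IH] [|b t] //=.
rewrite inE => /orP [/eqP -> | /IH [h1 h2]]; first by rewrite !inE !eqxx.
by rewrite !inE h1 h2 !orbT.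
Qed.

Lemma up {R : realType} (O I : R -> R -> R) e (Dx : R -> Prop)
  (ord : R -> R -> Prop) (rx : rel R) :
  uninorm_with O e ->
  (forall x y, Dx x -> in01 y -> in01 (I x y)) ->
  (forall u, ord u u) -> (forall u v w, ord u v -> ord v w -> ord u w) ->
  (forall u v w, in01 u -> in01 v -> in01 w -> ord u v -> ord (O u w) (O v w)) ->
  reflexive rx -> transitive rx ->
  (forall a b c d, Dx a -> Dx b -> in01 c -> in01 d -> rx a b -> c <= d ->
      ord (O (I a d) (I b c)) (O (I a c) (I b d))) ->
  forall n (ps : seq (R * R)) (xs ys : seq R), size ps = n ->
  (forall p, p \in ps -> Dx p.1 /\ in01 p.2) ->
  perm_eq (unzip1 ps) xs -> perm_eq (unzip2 ps) ys ->
  sorted rx xs -> sorted <=%R ys ->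
  ord (Gf O I e ps) (Gf O I e (zip xs ys)).
Proof.
move=> hO hI oref otr omono rref rtr key.
have [cl [cm [asc [mo [e01 eid]]]]] := hO.
have Gin : forall qs, (forall p, p \in qs -> Dx p.1 /\ in01 p.2) -> in01 (Gf O I e qs).
  move=> qs hq; apply: foldr_in01 hO _ => z /mapP [p hp ->].
  by have [h1 h2] := hq p hp; apply: hI.
have Gperm : forall qs1 qs2, perm_eq qs1 qs2 ->
    (forall p, p \in qs1 -> Dx p.1 /\ in01 p.2) -> Gf O I e qs1 = Gf O I e qs2.
  move=> qs1 qs2 hp hq; apply: foldr_perm hO _ _; first exact: perm_map.
  by move=> z /mapP [p hp' ->]; have [h1 h2] := hq p hp'; apply: hI.
have omono2 : forall u v w, in01 u -> in01 v -> in01 w -> ord u v -> ord (O w u) (O w v).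
  by move=> u v w hu hv hw h; rewrite (cm w u) // (cm w v) //; apply: omono.
elim=> [|n IH] ps xs ys hs hps hpx hpy sx sy.
  case: ps hs hpx hpy hps => // _ hpx hpy _.
  case: xs hpx sx => [|x xs] /= hpx sx; last by move/perm_size: hpx.
  have -> : zip [::] ys = [::] by case: ys {hpy sy}.
  exact: oref.
have hsx : size xs = n.+1 by rewrite -(perm_size hpx) size_map.
have hsy : size ys = n.+1 by rewrite -(perm_size hpy) size_map.
case: xs hpx sx hsx => // m xs hpx sx hsx.
case: ys hpy sy hsy => // y0 ys hpy sy hsy.
have mx : forall a, a \in unzip1 ps -> rx m a.
  move=> a; rewrite (perm_mem hpx) inE => /orP [/eqP -> // | ha].
  by have /allP := order_path_min rtr sx; apply.
have my : forall y, y \in unzip2 ps -> y0 <= y.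
  move=> y; rewrite (perm_mem hpy) inE => /orP [/eqP -> // | hy].
  by have /allP := order_path_min le_trans sy; apply.
have dxs : forall z, z \in xs -> Dx z.
  move=> z hz; have : z \in unzip1 ps by rewrite (perm_mem hpx) inE hz orbT.
  by case/mapP => p hp ->; have [] := hps p hp.
have iys : forall z, z \in ys -> in01 z.
  move=> z hz; have : z \in unzip2 ps by rewrite (perm_mem hpy) inE hz orbT.
  by case/mapP => p hp ->; have [] := hps p hp.
have hzip : forall p, p \in zip xs ys -> Dx p.1 /\ in01 p.2.
  by move=> p /mem_zip' [h1 h2]; split; [apply: dxs | apply: iys].
have step1 : forall qs, size qs = n.+1 -> (forall p, p \in qs -> Dx p.1 /\ in01 p.2) ->
    perm_eq (unzip1 qs) (m :: xs) -> perm_eq (unzip2 qs) (y0 :: ys) -> (m, y0) \in qs ->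
    ord (Gf O I e qs) (Gf O I e ((m, y0) :: zip xs ys)).
  move=> qs hsq hq hq1 hq2 hin.
  have hperm := perm_to_rem hin.
  have hr : forall p, p \in rem (m, y0) qs -> Dx p.1 /\ in01 p.2.
    by move=> p hp; apply: hq; apply: (mem_rem hp).
  have [dm i0] := hq _ hin.
  rewrite (Gperm _ _ hperm hq) /Gf /=.
  apply: omono2; [exact: (Gin _ hr) | exact: (Gin _ hzip) | exact: hI | ].
  apply: (IH (rem (m, y0) qs) xs ys) => //.
  - by rewrite size_rem // hsq.
  - rewrite -(perm_cons m); apply: perm_trans _ hq1.
    by rewrite perm_sym; apply: (perm_map fst hperm).
  - rewrite -(perm_cons y0); apply: perm_trans _ hq2.
    by rewrite perm_sym; apply: (perm_map snd hperm).
  - exact: path_sorted sx.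
  - exact: path_sorted sy.
have : m \in unzip1 ps by rewrite (perm_mem hpx) mem_head.
case/mapP => -[m' yk] hmk /= em; subst m'.
have : y0 \in unzip2 ps by rewrite (perm_mem hpy) mem_head.
case/mapP => -[a y0'] hay /= ey; subst y0'.
case: (boolP ((m, y0) \in ps)) => hin; first exact: step1.
have neq : (m, yk) != (a, y0).
  by apply/eqP => -[_ e2]; move: hin; rewrite -e2 hmk.
have hin2 : (m, yk) \in rem (a, y0) ps := rem_mem neq hmk.
set rest := rem (m, yk) (rem (a, y0) ps).
have hperm : perm_eq ps ((a, y0) :: (m, yk) :: rest).
  apply: perm_trans (perm_to_rem hay) _.
  by rewrite perm_cons; apply: perm_to_rem.
have hr : forall p, p \in rest -> Dx p.1 /\ in01 p.2.
  by move=> p hp; apply: hps; apply: (mem_rem (mem_rem hp)).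
have [da iy0] := hps _ hay.
have [dm ik] := hps _ hmk.
set qs := [:: (m, y0), (a, yk) & rest].
have hq : forall p, p \in qs -> Dx p.1 /\ in01 p.2.
  by move=> p; rewrite !inE => /orP [/eqP -> | /orP [/eqP -> | /hr]].
apply: (otr _ (Gf O I e qs)).
  rewrite (Gperm _ _ hperm hps) /Gf /=.
  have hF := Gin _ hr; rewrite /Gf in hF.
  rewrite (asc (I a y0)) ?(asc (I m y0)); try (exact: hF); try by apply: hI.
  rewrite (cm (I a y0)); try by apply: hI.
  apply: omono => //; try (apply: cl; by apply: hI).
  apply: key => //; first by apply: mx; apply: (map_f fst hay).
  by apply: my; apply: (map_f snd hmk).
apply: step1 => //.
- by rewrite /qs /= -hs (perm_size hperm).
- apply: perm_trans _ hpx.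
  apply: (@perm_trans _ (unzip1 ((a, y0) :: (m, yk) :: rest))); last first.
    by rewrite perm_sym; apply: perm_map.
  by apply/permPl; apply: (perm_catCA [:: m] [:: a]).
- apply: perm_trans _ hpy.
  by rewrite perm_sym; apply: (perm_map snd hperm).
- exact: mem_head.
Qed.

Lemma rearr_gen {R : realType} (O I : R -> R -> R) e (ord : R -> R -> Prop) :
  uninorm_with O e ->
  (forall x y, in01 x -> in01 y -> in01 (I x y)) ->
  (forall u, ord u u) -> (forall u v w, ord u v -> ord v w -> ord u w) ->
  (forall u v w, in01 u -> in01 v -> in01 w -> ord u v -> ord (O u w) (O v w)) ->
  (forall a b c d, in01 a -> in01 b -> in01 c -> in01 d -> a <= b -> c <= d ->
      ord (O (I a d) (I b c)) (O (I a c) (I b d))) ->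
  forall n (x y : 'I_n -> R) (sigma : 'S_n), (0 < n)%N ->
    sorted01 x -> sorted01 y ->
    ord (comb I O x y (@rev_ord n)) (comb I O x y sigma) /\
    ord (comb I O x y sigma) (comb I O x y id).
Proof.
move=> hO hI oref otr omono key n x y sigma n0 [x01 xs] [y01 ys].
have [cl [cm _]] := hO.
have combG : forall s : 'I_n -> 'I_n,
    comb I O x y s = Gf O I e [seq (x (s i), y i) | i <- enum 'I_n].
  move=> s; rewrite /comb /Gf -map_comp; apply: fold1_foldr hO _ _.
  - by move=> z /mapP [i _ ->]; apply: hI.
  - by rewrite -size_eq0 size_map size_enum_ord -lt0n.
have permx : forall s : 'I_n -> 'I_n, injective s ->
    perm_eq [seq x (s i) | i <- enum 'I_n] [seq x i | i <- enum 'I_n].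
  move=> s hs.
  have -> : [seq x (s i) | i <- enum 'I_n] = map x (map s (enum 'I_n)) by rewrite -map_comp.
  apply: perm_map.
  have hu : uniq (map s (enum 'I_n)) by rewrite map_inj_uniq ?enum_uniq.
  have [_ heq] := uniq_min_size hu (fun i _ => mem_enum _ i) (eq_leq (esym (size_map s _))).
  exact: uniq_perm hu (enum_uniq _) heq.
have sortx : sorted <=%R [seq x i | i <- enum 'I_n].
  rewrite sorted_map; apply: (@sub_sorted _ (relpre val leq)).
    by move=> i j /=; apply: xs.
  by rewrite -sorted_map val_enum_ord iota_sorted.
have sorty : sorted <=%R [seq y i | i <- enum 'I_n].
  rewrite sorted_map; apply: (@sub_sorted _ (relpre val leq)).
    by move=> i j /=; apply: ys.
  by rewrite -sorted_map val_enum_ord iota_sorted.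
have sortr : sorted >=%R [seq x (rev_ord i) | i <- enum 'I_n].
  rewrite sorted_map; apply: (@sub_sorted _ (relpre val leq)).
    by move=> i j /= hij; apply: xs; rewrite /= leq_sub2l.
  by rewrite -sorted_map val_enum_ord iota_sorted.
set ps := [seq (x (sigma i), y i) | i <- enum 'I_n].
have hps : forall p, p \in ps -> in01 p.1 /\ in01 p.2.
  by move=> p /mapP [i _ ->]; split; [apply: x01 | apply: y01].
have hpx : unzip1 ps = [seq x (sigma i) | i <- enum 'I_n] by rewrite /unzip1 -map_comp.
have hpy : unzip2 ps = [seq y i | i <- enum 'I_n] by rewrite /unzip2 -map_comp.
have rge : reflexive (>=%R : rel R) by move=> u; exact: le_refl.
have tge : transitive (>=%R : rel R) by move=> a b c h1 h2; exact: le_trans h2 h1.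
have rle : reflexive (<=%R : rel R) by move=> u; exact: le_refl.
have tle : transitive (<=%R : rel R) by move=> a b c h1 h2; exact: le_trans h1 h2.
split.
- rewrite combG [comb _ _ _ _ sigma]combG -/ps -zip_map.
  change ((fun u v => ord v u) (Gf O I e ps) (Gf O I e (zip [seq x (rev_ord i) | i <- enum 'I_n] [seq y i | i <- enum 'I_n]))).
  apply: (@up R O I e (@in01 R) (fun u v => ord v u) >=%R hO hI oref
    (fun u v w h1 h2 => otr _ _ _ h2 h1)
    (fun u v w hu hv hw h => omono _ _ _ hv hu hw h) rge tge _ _ _ _ _ (erefl _) hps) => //.
  + move=> a b c d ha hb hc hd hab hcd.
    have := key b a c d hb ha hc hd hab hcd.
    by rewrite (cm (I b d)) ?(cm (I b c)); try apply: hI.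
  + rewrite hpx; apply: perm_trans (permx _ (@perm_inj _ sigma)) _.
    by rewrite perm_sym; apply: permx; apply: rev_ord_inj.
  + by rewrite hpy.
- rewrite combG [comb _ _ _ _ id]combG -/ps -zip_map.
  apply: (@up R O I e (@in01 R) ord <=%R hO hI oref otr omono rle tle key _ _ _ _ (erefl _) hps) => //.
  + by rewrite hpx; apply: permx; apply: perm_inj.
  + by rewrite hpy.
Qed.

Lemma key1 {R : realType} (ot op : R -> R -> R) e :
  copula ot -> uninorm_with op e -> propA' op ->
  forall a b c d : R, in01 a -> in01 b -> in01 c -> in01 d -> a <= b -> c <= d ->
    op (ot a d) (ot b c) <= op (ot a c) (ot b d).
Proof.
case=> cl _ m1 m2 B [_ [cm _]] hA a b c d ha hb hc hd hab hcd.
have hp := cl a c ha hc; have hq := cl a d ha hd.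
have hr := cl b c hb hc; have hs := cl b d hb hd.
have pq : ot a c <= ot a d by apply: m2.
have pr : ot a c <= ot b c by apply: m1.
have qs : ot a d <= ot b d by apply: m1.
have rs : ot b c <= ot b d by apply: m2.
move: ha hb hc hd => /andP [a0 a1] /andP [b0 b1] /andP [c0 c1] /andP [d0 d1].
have hB := B a b c d a0 hab b1 c0 hcd d1.
move: (hp) (hs) => /andP [p0 _] /andP [_ s1].
have [qr|rq] := lerP (ot a d) (ot b c).
  by apply: hA => //; lra.
rewrite cm //; apply: hA => //; [exact: ltW | lra].
Qed.

Lemma key2 {R : realType} (ot op cop : R -> R -> R) e :
  uninorm_with ot e -> propA ot -> tconorm op -> copula cop ->
  (forall x y, in01 x -> in01 y -> op x y = dual_of cop x y) ->
  forall a b c d : R, in01 a -> in01 b -> in01 c -> in01 d -> a <= b -> c <= d ->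
    ot (op a c) (op b d) <= ot (op a d) (op b c).
Proof.
move=> [_ [cm _]] hA [cl [cmo [_ [m1 _]]]] [_ _ _ _ B] hd a b c d ha hb hc hdd hab hcd.
have hp := cl a c ha hc; have hq := cl a d ha hdd.
have hr := cl b c hb hc; have hs := cl b d hb hdd.
have m2 : forall x y z, in01 x -> in01 y -> in01 z -> x <= y -> op z x <= op z y.
  by move=> x y z hx hy hz h; rewrite (cmo z x) // (cmo z y) //; apply: m1.
have pq : op a c <= op a d by apply: m2.
have pr : op a c <= op b c by apply: m1.
have qs : op a d <= op b d by apply: m1.
have rs : op b c <= op b d by apply: m2.
have sum : op b d + op a c <= op a d + op b c.
  rewrite !hd //.
  move: ha hb hc hdd => /andP [a0 a1] /andP [b0 b1] /andP [c0 c1] /andP [d0 d1].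
  have := B (1 - b) (1 - a) (1 - d) (1 - c).
  rewrite /dual_of; move=> H.
  have := H ltac:(lra) ltac:(lra) ltac:(lra) ltac:(lra) ltac:(lra) ltac:(lra).
  lra.
move: (hp) (hs) => /andP [p0 _] /andP [_ s1].
have [qr|rq] := lerP (op a d) (op b c).
  by apply: hA.
rewrite (cm (op a d)) //; apply: hA => //; [exact: ltW | lra].
Qed.

Theorem theorem8 (R : realType) (otimes oplus : R -> R -> R) :
  uninorm otimes -> uninorm oplus ->
  (tnorm otimes -> copula otimes -> propA' oplus ->
     rearrangement otimes oplus)
  /\
  (propA otimes -> tconorm oplus ->
     (exists c : R -> R -> R, copula c /\
        forall x y, in01 x -> in01 y -> oplus x y = dual_of c x y) ->
     dual_rearrangement otimes oplus).
Proof.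
move=> [et hot] [ep hop]; split.
- move=> htn hcop hA n x y sigma n0 sx sy.
  have [clt _] := htn.
  have [_ [_ [_ [mo _]]]] := hop.
  have K := key1 hcop hop hA.
  exact: (@rearr_gen R oplus otimes ep (fun u v => u <= v) hop clt
     (fun u => le_refl u) (fun u v w h1 h2 => le_trans h1 h2) mo K n x y sigma n0 sx sy).
- move=> hA htc [cop [hcop hd]] n x y sigma n0 sx sy.
  have [clp _] := htc.
  have [_ [_ [_ [mo _]]]] := hot.
  have K := key2 hot hA htc hcop hd.
  exact: (@rearr_gen R otimes oplus et (fun u v => v <= u) hot clp
     (fun u => le_refl u) (fun u v w h1 h2 => le_trans h2 h1)
     (fun u v w hu hv hw h => mo v u w hv hu hw h) K n x y sigma n0 sx sy).
Qed.
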